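(* Let $k\geq 2$ and $n\geq 1$ be integers and let $G\in\mathcal{G}_{k,n}$. Then $G$ contains $H_k$ as a subgraph (i.e., there is an injective map $\sigma:V(H_k)\to V(G)$ sending every edge of $H_k$ to an edge of $G$) if and only if there exist $i_{\mathrm{top}},i_{\mathrm{bot}}\in[n]$ such that both $\{f_{\mathrm{top},a,i_{\mathrm{top}}},\,f_{\mathrm{bot},a,i_{\mathrm{bot}}}\}\in E(G)$ and $\{f_{\mathrm{top},b,i_{\mathrm{top}}},\,f_{\mathrm{bot},b,i_{\mathrm{bot}}}\}\in E(G)$.
   Context: Sides $S\in\{\mathrm{top},\mathrm{bot}\}$, orientations $X\in\{a,b,\mathrm{mid}\}$. Define $c(\mathrm{top},a)=6$, $c(\mathrm{top},b)=7$, $c(\mathrm{bot},a)=8$, $c(\mathrm{bot},b)=9$, and $c(S,\mathrm{mid})=10$ for both $S$. The graph $H_k$: vertices are (i) four endpoints $e_{S,P}$ for $S\in\{\mathrm{top},\mathrm{bot}\}$, $P\in\{a,b\}$; (ii) for each $s\in\{6,\dots,10\}$ a set $K_s$ of $s$ vertices forming an $s$-clique, with a distinguished vertex $\kappa_s\in K_s$; (iii) triangle vertices $t_{S,i,X}$ for $S\in\{\mathrm{top},\mathrm{bot}\}$, $i\in[k]$, $X\in\{a,b,\mathrm{mid}\}$. Edges: all edges inside each $K_s$; for each $S,i$ the three vertices $t_{S,i,a},t_{S,i,b},t_{S,i,\mathrm{mid}}$ form a triangle; $\{e_{\mathrm{top},P},e_{\mathrm{bot},P}\}$ for each $P\in\{a,b\}$;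 $\{e_{S,P},\kappa_{c(S,P)}\}$ for all $S,P$; $\{t_{S,i,X},\kappa_{c(S,X)}\}$ for all $S,i,X$; $\{\kappa_s,\kappa_{s'}\}$ for all distinct $s,s'\in\{6,\dots,10\}$; and $\{e_{S,P},t_{S,i,P}\}$ for all $S$, $P\in\{a,b\}$, $i\in[k]$. No other edges. The family $\mathcal{G}_{k,n}$: let $m=k\lceil n^{1/k}\rceil$ and fix an ordering $Q_1,\dots,Q_N$ of the $k$-element subsets of $[m]$ (note $N=\binom{m}{k}\ge n$). A graph $G$ is in $\mathcal{G}_{k,n}$ if its vertices are: endpoint copies $f_{S,P,i}$ for $S\in\{\mathrm{top},\mathrm{bot}\}$, $P\in\{a,b\}$, $i\in[n]$; triangle vertices $u_{S,j,X}$ for $S\in\{\mathrm{top},\mathrm{bot}\}$, $j\in[m]$, $X\in\{a,b,\mathrm{mid}\}$; and for each $s\in\{6,\dots,10\}$ a set $K'_s$ of $s$ vertices with a distinguished vertex $\kappa'_s\in K'_s$; and its edges are exactly: all edges inside each $K'_s$; for each $S,j$ the triangle on $u_{S,j,a},u_{S,j,b},u_{S,j,\mathrm{mid}}$; $\{f_{S,P,i},\kappa'_{c(S,P)}\}$ for all $S,P,i$; $\{u_{S,j,X},\kappa'_{c(S,X)}\}$ for all $S,j,X$; $\{\kappa'_s,\kappa'_{s'}\}$ for all distinct $s,s'$; $\{f_{S,P,i},u_{S,j,P}\}$ for all $S$, $P\in\{a,b\}$, $i\in[n]$ and $j\in Q_i$; and, for each $P\in\{a,b\}$, an arbitrary subset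 of the pairs $\{f_{\mathrm{top},P,i},f_{\mathrm{bot},P,i'}\}$, $i,i'\in[n]$. *)

(* Defs.v *)
From mathcomp Require Import all_boot.
Set Implicit Arguments. Unset Strict Implicit. Unset Printing Implicit Defensive.

Inductive side := Top | Bot.
Inductive pab := PA | PB.
Inductive orient := Oa | Ob | Omid.
Definition ori (P : pab) : orient := match P with PA => Oa | PB => Ob end.

Inductive cl := C6 | C7 | C8 | C9 | C10.
Definition csize (c : cl) : nat :=
  match c with C6 => 6 | C7 => 7 | C8 => 8 | C9 => 9 | C10 => 10 end.

Definition cc (S : side) (X : orient) : cl :=
  match S, X with
  | Top, Oa => C6 | Top, Ob => C7 | Bot, Oa => C8 | Bot, Ob => C9
  | _, Omid => C10 end.

(* Vertices: endpoints e_{S,P}; clique vertices (c, j) with j < |K_c|, the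
   distinguished vertex kappa_c being the one with j = 0; triangle vertices
   t_{S,i,X} with i in [k] (0-based). *)
Inductive VH (k : nat) :=
  | HE of side & pab
  | HK (c : cl) of 'I_(csize c)
  | HT of side & 'I_k & orient.

Inductive genH (k : nat) : VH k -> VH k -> Prop :=
  | gH_clique c (j j' : 'I_(csize c)) : j <> j' -> genH (HK k j) (HK k j')
  | gH_tri S i X Y : X <> Y -> genH (HT S i X) (HT S i Y)
  | gH_ends P : genH (HE k Top P) (HE k Bot P)
  | gH_end_kappa S P (j : 'I_(csize (cc S (ori P)))) :
      nat_of_ord j = 0 -> genH (HE k S P) (HK k j)
  | gH_tri_kappa S i X (j : 'I_(csize (cc S X))) :
      nat_of_ord j = 0 -> genH (HT S i X) (HK k j)
  | gH_kappa c c' (j : 'I_(csize c)) (j' : 'I_(csize c')) :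
      c <> c' -> nat_of_ord j = 0 -> nat_of_ord j' = 0 -> genH (HK k j) (HK k j')
  | gH_end_tri S P i : genH (HE k S P) (HT S i (ori P)).

Definition adjH (k : nat) (x y : VH k) : Prop := genH x y \/ genH y x.

(* ceil(n^(1/k)) = least r with n <= r^k (valid for k >= 1; r = n always works). *)
Definition ceil_root (k n : nat) : nat := find (fun r => n <= r ^ k) (iota 0 n.+1).
Definition mpar (k n : nat) : nat := k * ceil_root k n.

(* Vertices of a graph in G_{k,n}: f_{S,P,i} (i in [n]); clique vertices;
   u_{S,j,X} (j in [m]).  Indices are 0-based. *)
Inductive VG (n m : nat) :=
  | GF of side & pab & 'I_n
  | GK (c : cl) of 'I_(csize c)
  | GU of side & 'I_m & orient.

(* Qs : the fixed ordering Q_1,...,Q_N of the k-subsets of [m] (as a list);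
   Q_i = nth set0 Qs i.  ext P i i' says whether the pair
   {f_{top,P,i}, f_{bot,P,i'}} is chosen as an edge. *)
Inductive genG (n m : nat) (Qs : seq {set 'I_m}) (ext : pab -> 'I_n -> 'I_n -> bool)
  : VG n m -> VG n m -> Prop :=
  | gG_clique c (j j' : 'I_(csize c)) : j <> j' -> genG Qs ext (GK n m j) (GK n m j')
  | gG_tri S j X Y : X <> Y -> genG Qs ext (GU n S j X) (GU n S j Y)
  | gG_f_kappa S P i (j : 'I_(csize (cc S (ori P)))) :
      nat_of_ord j = 0 -> genG Qs ext (GF m S P i) (GK n m j)
  | gG_u_kappa S j X (j0 : 'I_(csize (cc S X))) :
      nat_of_ord j0 = 0 -> genG Qs ext (GU n S j X) (GK n m j0)
  | gG_kappa c c' (j : 'I_(csize c)) (j' : 'I_(csize c')) :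
      c <> c' -> nat_of_ord j = 0 -> nat_of_ord j' = 0 ->
      genG Qs ext (GK n m j) (GK n m j')
  | gG_f_u S P (i : 'I_n) (j : 'I_m) :
      j \in nth set0 Qs i -> genG Qs ext (GF m S P i) (GU n S j (ori P))
  | gG_ext P i i' : ext P i i' -> genG Qs ext (GF m Top P i) (GF m Bot P i').

Definition adjG (n m : nat) (Qs : seq {set 'I_m}) (ext : pab -> 'I_n -> 'I_n -> bool)
  (x y : VG n m) : Prop := genG Qs ext x y \/ genG Qs ext y x.

Definition contains_subgraph (VH0 VG0 : Type) (adjH0 : VH0 -> VH0 -> Prop)
  (adjG0 : VG0 -> VG0 -> Prop) : Prop :=
  exists sigma : VH0 -> VG0, injective sigma /\
    forall x y, adjH0 x y -> adjG0 (sigma x) (sigma y).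

(* Main.v *)
From HB Require Import structures.
Require Import Defs.
From Stdlib Require List.
From mathcomp Require Import all_boot zify.
Set Implicit Arguments. Unset Strict Implicit. Unset Printing Implicit Defensive.

Definition cl_eqb (a b : cl) := csize a == csize b.
Lemma cl_eqP : Equality.axiom cl_eqb.
Proof. by case; case; constructor. Qed.
HB.instance Definition _ := hasDecEq.Build cl cl_eqP.
Definition sd_n (s : side) := if s is Top then 0 else 1.
Definition sd_eqb (a b : side) := sd_n a == sd_n b.
Lemma sd_eqP : Equality.axiom sd_eqb.
Proof. by case; case; constructor. Qed.
HB.instance Definition _ := hasDecEq.Build side sd_eqP.
Definition pb_n (s : pab) := if s is PA then 0 else 1.
Definition pb_eqb (a b : pab) := pb_n a == pb_n b.
Lemma pb_eqP : Equality.axiom pb_eqb.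
Proof. by case; case; constructor. Qed.
HB.instance Definition _ := hasDecEq.Build pab pb_eqP.
Definition or_n (s : orient) := match s with Oa => 0 | Ob => 1 | Omid => 2 end.
Definition or_eqb (a b : orient) := or_n a == or_n b.
Lemma or_eqP : Equality.axiom or_eqb.
Proof. by case; case; constructor. Qed.
HB.instance Definition _ := hasDecEq.Build orient or_eqP.

Inductive node := NInner of cl | NKap of cl | NF of side & pab | NU of side & orient.

Definition adjN (a b : node) : bool :=
  match a, b with
  | NInner c, NInner c' => c == c'
  | NInner c, NKap c' => c == c'
  | NKap c', NInner c => c == c'
  | NKap c, NKap c' => c != c'
  | NKap c, NF T0 P => c == cc T0 (ori P)
  | NF T0 P, NKap c => c == cc T0 (ori P)
  | NKap c, NU T0 X => c == cc T0 X
  | NU T0 X, NKap c => c == cc T0 X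
  | NU T0 X, NU T1 Y => (T0 == T1) && (X != Y)
  | NF T0 P, NU T1 X => (T0 == T1) && (X == ori P)
  | NU T1 X, NF T0 P => (T0 == T1) && (X == ori P)
  | NF T0 P, NF T1 P' => (T0 != T1) && (P == P')
  | _, _ => false
  end.

Definition isIn (a : node) := if a is NInner _ then true else false.

Definition allN : list node :=
  [:: NInner C6; NInner C7; NInner C8; NInner C9; NInner C10;
      NKap C6; NKap C7; NKap C8; NKap C9; NKap C10;
      NF Top PA; NF Top PB; NF Bot PA; NF Bot PB;
      NU Top Oa; NU Top Ob; NU Top Omid; NU Bot Oa; NU Bot Ob; NU Bot Omid].

Lemma allN_in a : List.In a allN.
Proof.
case: a => [c|c|s p|s x]; [case: c|case: c|case: s; case: p|case: s; case: x];
  rewrite /allN /=; tauto.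
Qed.

Lemma fa (f : node -> bool) : List.forallb f allN = true -> forall a, f a = true.
Proof. move/List.forallb_forall => H a; exact: H (allN_in a). Qed.

Definition L6 a1 a2 a3 a4 a5 :=
  List.forallb (fun a6 => isIn a6 || ~~ [&& adjN a1 a6, adjN a2 a6, adjN a3 a6, adjN a4 a6 & adjN a5 a6]) allN.
Definition L5 a1 a2 a3 a4 :=
  List.forallb (fun a5 => if isIn a5 then true else if ~~ [&& adjN a1 a5, adjN a2 a5, adjN a3 a5 & adjN a4 a5] then true else L6 a1 a2 a3 a4 a5) allN.
Definition L4 a1 a2 a3 :=
  List.forallb (fun a4 => if isIn a4 then true else if ~~ [&& adjN a1 a4, adjN a2 a4 & adjN a3 a4] then true else L5 a1 a2 a3 a4) allN.
Definition L3 a1 a2 :=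
  List.forallb (fun a3 => if isIn a3 then true else if ~~ (adjN a1 a3 && adjN a2 a3) then true else L4 a1 a2 a3) allN.
Definition L2 a1 :=
  List.forallb (fun a2 => if isIn a2 then true else if ~~ adjN a1 a2 then true else L3 a1 a2) allN.
Definition chk6 := List.forallb (fun a1 => if isIn a1 then true else L2 a1) allN.
Arguments L6 : simpl never. Arguments L5 : simpl never. Arguments L4 : simpl never.
Arguments L3 : simpl never. Arguments L2 : simpl never.

Lemma chk6_true : chk6 = true.
Proof. vm_compute. reflexivity. Qed.

Lemma clique6 a1 a2 a3 a4 a5 a6 :
  adjN a1 a2 -> adjN a1 a3 -> adjN a2 a3 -> adjN a1 a4 -> adjN a2 a4 -> adjN a3 a4 ->
  adjN a1 a5 -> adjN a2 a5 -> adjN a3 a5 -> adjN a4 a5 ->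
  adjN a1 a6 -> adjN a2 a6 -> adjN a3 a6 -> adjN a4 a6 -> adjN a5 a6 ->
  [|| isIn a1, isIn a2, isIn a3, isIn a4, isIn a5 | isIn a6].
Proof.
move=> h12 h13 h23 h14 h24 h34 h15 h25 h35 h45 h16 h26 h36 h46 h56.
have := fa chk6_true a1.
case: (isIn a1) => // /fa /(_ a2).
case: (isIn a2) => //; rewrite h12 /= => /fa /(_ a3).
case: (isIn a3) => //; rewrite h13 h23 /= => /fa /(_ a4).
case: (isIn a4) => //; rewrite h14 h24 h34 /= => /fa /(_ a5).
case: (isIn a5) => //; rewrite h15 h25 h35 h45 /= => /fa /(_ a6).
by case: (isIn a6) => //; rewrite h16 h26 h36 h46 h56.
Qed.

Definition alpha {n m} (y : VG n m) : node :=
  match y with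
  | GF s p _ => NF s p
  | GK c j => if nat_of_ord j == 0 then NKap c else NInner c
  | GU s _ x => NU s x
  end.
Definition gcl {n m} (y : VG n m) : option cl := if y is GK c _ then Some c else None.
Definition getK {n m} (y : VG n m) : nat := if y is GK c j then nat_of_ord j else 0.

Definition gspec {n m} (Qs : seq {set 'I_m}) (ext : pab -> 'I_n -> 'I_n -> bool)
  (y z : VG n m) : Prop :=
  match y, z with
  | GK c j, GK c' j' => (c = c' /\ nat_of_ord j <> nat_of_ord j') \/
                        (c <> c' /\ nat_of_ord j = 0 /\ nat_of_ord j' = 0)
  | GU s j x, GU s' j' x' => s = s' /\ j = j' /\ x <> x'
  | GF s p i, GK c j => c = cc s (ori p) /\ nat_of_ord j = 0
  | GU s j x, GK c j0 => c = cc s x /\ nat_of_ord j0 = 0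
  | GF s p i, GU s' j x => s = s' /\ x = ori p /\ j \in nth set0 Qs i
  | GF s p i, GF s' p' i' => s = Top /\ s' = Bot /\ p = p' /\ ext p i i'
  | _, _ => False
  end.

Lemma genG_spec {n m} (Qs : seq {set 'I_m}) ext (y z : VG n m) :
  genG Qs ext y z -> gspec Qs ext y z.
Proof.
case=> //=.
- move=> c j j' ne; left; split=> // /val_inj; exact: ne.
- by move=> c c' j j' ne h h'; right.
Qed.

Lemma adjG_spec {n m} (Qs : seq {set 'I_m}) ext (y z : VG n m) :
  adjG Qs ext y z -> gspec Qs ext y z \/ gspec Qs ext z y.
Proof. by case=> /genG_spec; [left|right]. Qed.

Lemma gspec_N {n m} (Qs : seq {set 'I_m}) ext (y z : VG n m) :
  gspec Qs ext y z -> adjN (alpha y) (alpha z) /\ adjN (alpha z) (alpha y).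
Proof.
case: y => [s p i|c j|s j x]; case: z => [s' p' i'|c' j'|s' j' x'] //=.
- by case=> -> [-> [-> _]] /=; rewrite !eqxx.
- by case=> ? h; subst; rewrite h /= !eqxx.
- by case=> -> [-> _]; rewrite /= !eqxx.
- case=> [[? ne]|[ne [h h']]] /=; [subst|rewrite h h' /=].
  + by case: eqP => h1; case: eqP => h2 //=; rewrite ?eqxx //; case: ne; rewrite h1 h2.
  + by split; apply/eqP => e; apply: ne.
- by case=> ? h; subst; rewrite h /= !eqxx.
- case=> <- [_ ne] /=; rewrite eqxx /=; split; apply/eqP => e; apply: ne => //.
Qed.

Lemma adjG_N {n m} (Qs : seq {set 'I_m}) ext (y z : VG n m) :
  adjG Qs ext y z -> adjN (alpha y) (alpha z).
Proof. by case/adjG_spec => /gspec_N []. Qed.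

Lemma inner_nbr {n m} (Qs : seq {set 'I_m}) ext (y z : VG n m) :
  isIn (alpha y) -> adjG Qs ext y z -> gcl z = gcl y.
Proof.
case: y => [s p i|c j|s j x] //=; case: eqP => //= hj _ /adjG_spec.
case: z => [s' p' i'|c' j'|s' j' x'] /=.
- by case=> [|[_ h]] //; case: hj.
- by case=> [[[e _]|[_ [h _]]]|[[e _]|[_ [_ h]]]] //; rewrite ?e //; case: hj.
- by case=> [|[_ h]] //; case: hj.
Qed.

Lemma csize_ge6 c : 6 <= csize c. Proof. by case: c. Qed.
Lemma csize_gt0 c : 0 < csize c. Proof. by case: c. Qed.
Lemma csize_inj c c' : csize c = csize c' -> c = c'. Proof. by case: c; case: c'. Qed.
Definition o6 c t (ht : t < 6) : 'I_(csize c) := Ordinal (leq_trans ht (csize_ge6 c)).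
Definition k0 c : 'I_(csize c) := Ordinal (csize_gt0 c).

Lemma gK_form {n m} (y : VG n m) c : gcl y = Some c -> exists j : 'I_(csize c), y = GK n m j.
Proof. case: y => [s p i|c' j|s j x] /= e; try discriminate; case: e => <-; by exists j. Qed.

Lemma getK_lt {n m} (y : VG n m) c : gcl y = Some c -> getK y < csize c.
Proof. case: y => [s p i|c' j|s j x] /= e; try discriminate; by case: e => <-. Qed.

Lemma gK_eq {n m} (y z : VG n m) c : gcl y = Some c -> gcl z = Some c -> getK y = getK z -> y = z.
Proof.
case: y => [s p i|c1 j1|s j x] /= e1; try discriminate; case: e1 => e1; subst c1.
case: z => [s p i|c2 j2|s j x] /= e2; try discriminate; case: e2 => e2; subst c2.
by move/val_inj => ->.
Qed.

Definition getKH {k} (x : VH k) : nat := if x is HK c j then nat_of_ord j else 0.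
Definition gclH {k} (x : VH k) : option cl := if x is HK c _ then Some c else None.

Lemma HK_inj k c (j j' : 'I_(csize c)) : HK k j = HK k j' -> j = j'.
Proof. by move/(f_equal getKH) => /val_inj. Qed.

Lemma cc_inj s x s' x' : cc s x = cc s' x' -> x <> Omid -> s = s' /\ x = x'.
Proof. by case: s; case: x; case: s'; case: x'. Qed.
Lemma cc10 s x : cc s x = C10 -> x = Omid.
Proof. by case: s; case: x. Qed.
Lemma ori_inj p p' : ori p = ori p' -> p = p'.
Proof. by case: p; case: p'. Qed.
Lemma ori_mid p : ori p <> Omid. Proof. by case: p. Qed.

Lemma kap_nbr {n m} (Qs : seq {set 'I_m}) ext (y : VG n m) c (j : 'I_(csize c)) :
  nat_of_ord j = 0 -> gcl y = None -> adjG Qs ext y (GK n m j) ->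
  (exists s p i, y = GF m s p i /\ c = cc s (ori p)) \/
  (exists s j' x, y = GU n s j' x /\ c = cc s x).
Proof.
move=> hj; case: y => [s p i|//|s j' x] _ /adjG_spec /= [[e _]|//].
- by left; exists s, p, i.
- by right; exists s, j', x.
Qed.

Definition getU {n m} (d : 'I_m) (y : VG n m) : 'I_m := if y is GU _ j _ then j else d.

Lemma ccmid_ne s s' p : cc s Omid <> cc s' (ori p).
Proof. by case: s; case: s'; case: p. Qed.
Lemma ccmid_eq s s' x : cc s Omid = cc s' x -> x = Omid.
Proof. by case: s; case: s'; case: x. Qed.

Lemma HT_HK k s (i : 'I_k) X c (j : 'I_(csize c)) : HT s i X <> HK k j.
Proof. by []. Qed.

Lemma forward k n m (Qs : seq {set 'I_m}) ext (hk : 0 < k) (hQu : uniq Qs)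
  (hQ : forall A, A \in Qs -> #|A| = k) (sg : VH k -> VG n m) (inj : injective sg)
  (hom : forall x y, adjH x y -> adjG Qs ext (sg x) (sg y)) :
  exists itop ibot : 'I_n,
    adjG Qs ext (GF m Top PA itop) (GF m Bot PA ibot) /\
    adjG Qs ext (GF m Top PB itop) (GF m Bot PB ibot).
Proof.
have A1 : forall c, exists c', forall j : 'I_(csize c), gcl (sg (HK k j)) = Some c'.
  move=> c.
  have key : forall j0 : 'I_(csize c), isIn (alpha (sg (HK k j0))) ->
      exists c', forall j : 'I_(csize c), gcl (sg (HK k j)) = Some c'.
    move=> j0 hin.
    have [c' e] : exists c', gcl (sg (HK k j0)) = Some c'.
      by move: hin; case: (sg (HK k j0)) => // c' j _; exists c'.
    exists c' => j; case: (eqVneq j j0) => [->//|ne].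
    rewrite -e; apply: inner_nbr hin _; apply: hom; left; constructor.
    by move=> e'; rewrite e' eqxx in ne.
  have hadj : forall j j' : 'I_(csize c), nat_of_ord j <> nat_of_ord j' ->
      adjN (alpha (sg (HK k j))) (alpha (sg (HK k j'))).
    move=> j j' ne; apply: adjG_N; apply: hom; left; constructor.
    by move=> e; apply: ne; rewrite e.
  have := clique6
    (hadj (@o6 c 0 erefl) (@o6 c 1 erefl) ltac:(done))
    (hadj (@o6 c 0 erefl) (@o6 c 2 erefl) ltac:(done))
    (hadj (@o6 c 1 erefl) (@o6 c 2 erefl) ltac:(done))
    (hadj (@o6 c 0 erefl) (@o6 c 3 erefl) ltac:(done))
    (hadj (@o6 c 1 erefl) (@o6 c 3 erefl) ltac:(done))
    (hadj (@o6 c 2 erefl) (@o6 c 3 erefl) ltac:(done))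
    (hadj (@o6 c 0 erefl) (@o6 c 4 erefl) ltac:(done))
    (hadj (@o6 c 1 erefl) (@o6 c 4 erefl) ltac:(done))
    (hadj (@o6 c 2 erefl) (@o6 c 4 erefl) ltac:(done))
    (hadj (@o6 c 3 erefl) (@o6 c 4 erefl) ltac:(done))
    (hadj (@o6 c 0 erefl) (@o6 c 5 erefl) ltac:(done))
    (hadj (@o6 c 1 erefl) (@o6 c 5 erefl) ltac:(done))
    (hadj (@o6 c 2 erefl) (@o6 c 5 erefl) ltac:(done))
    (hadj (@o6 c 3 erefl) (@o6 c 5 erefl) ltac:(done))
    (hadj (@o6 c 4 erefl) (@o6 c 5 erefl) ltac:(done)).
  by do 5! (case/orP; first exact: key); exact: key.
have A2 : forall c c', (forall j : 'I_(csize c), gcl (sg (HK k j)) = Some c') ->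
    csize c <= csize c' /\ (csize c = csize c' ->
      forall j' : 'I_(csize c'), exists j : 'I_(csize c), sg (HK k j) = GK n m j').
  move=> c c' hc.
  pose f (j : 'I_(csize c)) : 'I_(csize c') := insubd (k0 c') (getK (sg (HK k j))).
  have fv : forall j, nat_of_ord (f j) = getK (sg (HK k j)).
    by move=> j; rewrite /f insubdK //; apply: getK_lt (hc j).
  have finj : injective f.
    move=> j1 j2 /(f_equal val) /=; rewrite !fv => /(gK_eq (hc j1) (hc j2)).
    by move/inj/HK_inj.
  split; first by have := leq_card f finj; rewrite !card_ord.
  move=> ec j'.
  have : j' \in [set f j | j in setT].
    suff -> : [set f j | j in setT] = setT by rewrite inE.
    apply/eqP; rewrite eqEcard subsetT card_imset // !cardsT !card_ord ec leqnn //.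
  case/imsetP => j _ ->; exists j.
  have [jj e] := gK_form (hc j).
  rewrite e; congr (GK n m _); apply: val_inj => /=; by rewrite fv e.
pose surj c := forall j' : 'I_(csize c), exists j : 'I_(csize c), sg (HK k j) = GK n m j'.
have A3 : forall c, (forall c'', csize c < csize c'' -> surj c'') ->
    (forall j : 'I_(csize c), gcl (sg (HK k j)) = Some c) /\ surj c.
  move=> c hbig.
  have [c' hc] := A1 c.
  have [le _] := A2 c c' hc.
  have ec : c' = c.
    move: le; rewrite leq_eqVlt => /orP [/eqP e|lt]; first by apply: csize_inj.
    have [jj e] := gK_form (hc (k0 c)).
    have [jc ejc] := hbig c' lt jj.
    by move: ejc; rewrite -e => /inj /(f_equal gclH) [].
  subst c'; split=> //.
  exact: (A2 c c hc).2 erefl.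
have S10 : surj C10 by apply: (A3 C10 _).2 => c''; case: c''.
have S9 : surj C9 by apply: (A3 C9 _).2 => c''; case: c''.
have S8 : surj C8 by apply: (A3 C8 _).2 => c''; case: c''.
have S7 : surj C7 by apply: (A3 C7 _).2 => c''; case: c''.
have S6 : surj C6 by apply: (A3 C6 _).2 => c''; case: c''.
have Sall : forall c, surj c by case.
have Kin : forall c (j : 'I_(csize c)), gcl (sg (HK k j)) = Some c.
  by move=> c; apply: (A3 c _).1 => c'' _; apply: Sall.
have B : forall c, exists j : 'I_(csize c), nat_of_ord j = 0 /\ sg (HK k (k0 c)) = GK n m j.
  move=> c; have [jj e] := gK_form (Kin c (k0 c)).
  exists jj; split=> //.
  apply/eqP; apply: contraT => hj.
  pose c2 := if c is C6 then C7 else C6.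
  have ne : c <> c2 by case: c {jj e hj} @c2.
  have hin : isIn (alpha (sg (HK k (k0 c)))) by rewrite e /= (negbTE hj).
  have := inner_nbr hin (hom _ _ (or_introl (@gH_kappa k c c2 (k0 c) (k0 c2) ne erefl erefl))).
  by rewrite !Kin => -[] /esym.
have C : forall x, (forall c (j : 'I_(csize c)), x <> HK k j) -> gcl (sg x) = None.
  move=> x hx; case E: (gcl (sg x)) => [c|] //.
  have [jj e] := gK_form E.
  have [j ej] := Sall c jj.
  by move: ej; rewrite -e => /inj /esym /hx.
have hD : forall x s X, X <> Omid -> (forall c (j : 'I_(csize c)), x <> HK k j) ->
    adjH x (HK k (k0 (cc s X))) ->
    (exists p i, ori p = X /\ sg x = GF m s p i) \/ (exists j, sg x = GU n s j X).
  move=> x s X hX hx hadj.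
  have [jj [h0 e]] := B (cc s X).
  move: (hom _ _ hadj); rewrite e => /(kap_nbr h0 (C x hx)).
  case=> [[s' [p [i [-> ec]]]]|[s' [j [x' [-> ec]]]]].
  - have [es eo] := cc_inj ec hX; subst; left; by exists p, i.
  - have [es eo] := cc_inj ec hX; subst; right; by exists j.
have hE : forall s p, (exists p' i, ori p' = ori p /\ sg (HE k s p) = GF m s p' i) \/
    (exists j, sg (HE k s p) = GU n s j (ori p)).
  move=> s p; apply: (hD (HE k s p) s (ori p) (@ori_mid p)) => //; left; exact: gH_end_kappa.
have E : forall p, exists i i', sg (HE k Top p) = GF m Top p i /\ sg (HE k Bot p) = GF m Bot p i'.
  move=> p; move: (hom _ _ (or_introl (@gH_ends k p))).
  case: (hE Top p) => [[p1 [i [o1 ->]]]|[j1 ->]];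
  case: (hE Bot p) => [[p2 [i' [o2 ->]]]|[j2 ->]] => /adjG_spec /=.
  - move=> _; move/ori_inj: o1 => ->; move/ori_inj: o2 => ->; by exists i, i'.
  - by case=> [[]|].
  - by case=> [|[]].
  - by case=> [[]|[]].
have F : forall s (i : 'I_k), exists j, forall p, sg (HT s i (ori p)) = GU n s j (ori p).
  move=> s i.
  have [jj [h0 e]] := B (cc s Omid).
  move: (hom _ _ (or_introl (@gH_tri_kappa k s i Omid (k0 (cc s Omid)) erefl))).
  rewrite e => /(kap_nbr h0 (C _ (fun c j => @HT_HK k s i Omid c j))).
  case=> [[s' [p [i' [_ ec]]]]|[s' [j [x' [em ec]]]]].
    by case: (ccmid_ne ec).
  have ex : x' = Omid := ccmid_eq ec.
  subst x'; exists j => p.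
  move: (hom _ _ (or_introl (@gH_tri k s i (ori p) Omid (@ori_mid p)))); rewrite em.
  have hadj : adjH (HT s i (ori p)) (HK k (k0 (cc s (ori p)))).
    by left; exact: gH_tri_kappa.
  case: (hD _ s (ori p) (@ori_mid p) (fun c j => @HT_HK k s i (ori p) c j) hadj)
    => [[p' [i'' [_ ->]]]|[j' ->]] /adjG_spec /=.
  - by case=> [[_ [h _]]|//]; case: (@ori_mid p'); rewrite h.
  - by case=> [[_ [-> _]]|[_ [-> _]]].
have hEs : forall s p, exists i, sg (HE k s p) = GF m s p i.
  by move=> s p; have [i [i' [h1 h2]]] := E p; case: s; [exists i | exists i'].
have G : forall s, exists g, sg (HE k s PA) = GF m s PA g /\ sg (HE k s PB) = GF m s PB g.
  move=> s.
  have [gA eA] := hEs s PA; have [gB eB] := hEs s PB.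
  have [d _] := F s (Ordinal hk).
  pose h i := getU d (sg (HT s i Oa)).
  have hF : forall i p, sg (HT s i (ori p)) = GU n s (h i) (ori p).
    move=> i p; have [j hj] := F s i; rewrite /h; move: (hj PA) => /= ->; exact: hj.
  have hinj : injective h.
    move=> i1 i2 e; have e1 := hF i1 PA; have e2 := hF i2 PA; rewrite e -e2 in e1.
    by case/inj: e1.
  have mem : forall p g, sg (HE k s p) = GF m s p g -> forall i, h i \in nth set0 Qs g.
    move=> p g eg i; move: (hom _ _ (or_introl (@gH_end_tri k s p i))).
    by rewrite eg hF => /adjG_spec /= [[_ [_ ->]]|].
  have ltQ : forall g : 'I_n, (forall i, h i \in nth set0 Qs g) -> g < size Qs.
    move=> g hm; rewrite ltnNge; apply/negP => le.
    by have := hm (Ordinal hk); rewrite nth_default // inE.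
  have setE : forall g : 'I_n, (forall i, h i \in nth set0 Qs g) ->
      nth set0 Qs g = [set h i | i in setT].
    move=> g hm; have cardQ := hQ _ (mem_nth set0 (ltQ g hm)).
    apply/esym/eqP; rewrite eqEcard cardQ card_imset // cardsT card_ord leqnn andbT.
    by apply/subsetP => x /imsetP [i _ ->].
  have eAB : gA = gB.
    apply: val_inj; apply/eqP.
    rewrite -(nth_uniq set0 (ltQ _ (mem _ _ eA)) (ltQ _ (mem _ _ eB)) hQu).
    by rewrite (setE _ (mem _ _ eA)) (setE _ (mem _ _ eB)).
  by exists gA; rewrite eA eB eAB.
have [gT [eTA eTB]] := G Top; have [gB [eBA eBB]] := G Bot.
exists gT, gB; split.
- by move: (hom _ _ (or_introl (@gH_ends k PA))); rewrite eTA eBA.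
- by move: (hom _ _ (or_introl (@gH_ends k PB))); rewrite eTB eBB.
Qed.

Lemma ceil_root_spec k n : 0 < k -> 0 < n -> n <= ceil_root k n ^ k /\ 0 < ceil_root k n.
Proof.
move=> hk hn.
have hh : has (fun r => n <= r ^ k) (iota 0 n.+1).
  apply/hasP; exists n; first by rewrite mem_iota add0n ltnSn.
  by rewrite -{1}(expn1 n) leq_pexp2l.
have := nth_find 0 hh; rewrite nth_iota; last by move: hh; rewrite has_find size_iota.
rewrite add0n /ceil_root => h; split=> //.
move: h; case: (find _ _) => // ; rewrite exp0n //; by move: hn; clear; case: n.
Qed.

Lemma binom_ge k r : 0 < r -> r ^ k <= 'C(k * r, k).
Proof.
move=> hr.
have aux : forall j, j <= k -> r ^ j * k ^_ j <= (k * r) ^_ j.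
  elim=> [|j IH] hj; first by rewrite ffactn0 expn0.
  rewrite !ffactnSr expnS.
  have -> : r * r ^ j * (k ^_ j * (k - j)) = (r ^ j * k ^_ j) * (r * (k - j)).
    by lia.
  apply: leq_mul; first by apply: IH; apply: ltnW.
  have : j <= r * j by rewrite leq_pmull.
  rewrite mulnBr [k * r]mulnC; move: hj; lia.
have := aux k (leqnn k); rewrite ffactnn -bin_ffact leq_pmul2r //; exact: fact_gt0.
Qed.

Definition pickQ m k (A : {set 'I_m}) (h : #|A| = k) (i : 'I_k) : 'I_m :=
  enum_val (cast_ord (esym h) i).
Lemma pickQ_in m k (A : {set 'I_m}) (h : #|A| = k) i : pickQ h i \in A.
Proof. exact: enum_valP. Qed.
Lemma pickQ_inj m k (A : {set 'I_m}) (h : #|A| = k) : injective (pickQ h).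
Proof. by move=> i j /enum_val_inj /cast_ord_inj. Qed.

Theorem lemma1 (k n : nat) (hk : 2 <= k) (hn : 1 <= n)
  (Qs : seq {set 'I_(mpar k n)})
  (hQuniq : uniq Qs)
  (hQall : forall A : {set 'I_(mpar k n)}, (A \in Qs) = (#|A| == k))
  (ext : pab -> 'I_n -> 'I_n -> bool) :
  contains_subgraph (@adjH k) (adjG Qs ext) <->
  exists itop ibot : 'I_n,
    adjG Qs ext (GF (mpar k n) Top PA itop) (GF (mpar k n) Bot PA ibot) /\
    adjG Qs ext (GF (mpar k n) Top PB itop) (GF (mpar k n) Bot PB ibot).
Proof.
have hk1 : 0 < k by apply: ltnW.
split.
- case=> sg [inj hom]; apply: (forward hk1 hQuniq _ inj hom) => A.
  by rewrite hQall => /eqP.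
- case=> itop [ibot [hA hB]].
  have hsize : n <= size Qs.
    have [h1 h2] := ceil_root_spec hk1 hn.
    have -> : size Qs = 'C(mpar k n, k).
      rewrite -(card_uniqP hQuniq).
      transitivity #|[set A : {set 'I_(mpar k n)} | #|A| == k]|;
        last by rewrite card_draws card_ord.
      by apply: eq_card => A; rewrite hQall inE.
    apply: leq_trans h1 _; exact: binom_ge.
  have cardQ : forall i : 'I_n, #|nth set0 Qs i| = k.
    move=> i; apply/eqP; rewrite -hQall; apply: mem_nth.
    exact: leq_trans (ltn_ord i) hsize.
  pose q (s : side) : 'I_k -> 'I_(mpar k n) :=
    if s is Top then pickQ (cardQ itop) else pickQ (cardQ ibot).
  pose ix (s : side) := if s is Top then itop else ibot.
  have qin : forall s i, q s i \in nth set0 Qs (ix s) by case=> i; apply: pickQ_in.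
  have qinj : forall s, injective (q s) by case; apply: pickQ_inj.
  exists (fun x => match x with
                   | HE s p => GF (mpar k n) s p (ix s)
                   | HK c j => GK n (mpar k n) j
                   | HT s i X => GU n s (q s i) X end).
  split.
  + move=> [s p|c j|s i X] [s' p'|c' j'|s' i' X'] //=.
    * by case=> -> ->.
    * move=> e; have := f_equal gcl e; case=> ec; subst c'.
      by have := f_equal getK e => /= /val_inj ->.
    * by case=> es eq ex; subst; rewrite (qinj _ _ _ eq).
  + have hg : forall x y, genH x y -> adjG Qs ext
        ((fun x => match x with
                   | HE s p => GF (mpar k n) s p (ix s)
                   | HK c j => GK n (mpar k n) j
                   | HT s i X => GU n s (q s i) X end) x)
        ((fun x => match x with
                   | HE s p => GF (mpar k n) s p (ix s)
                   | HK c j => GK n (mpar k n) j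
                   | HT s i X => GU n s (q s i) X end) y).
      move=> x y; case=> /=.
      * by move=> c j j' ne; left; constructor.
      * by move=> s i X Y ne; left; constructor.
      * by case.
      * by move=> s p j h; left; constructor.
      * by move=> s i X j h; left; constructor.
      * by move=> c c' j j' ne h h'; left; constructor.
      * by move=> s p i; left; constructor; apply: qin.
    move=> x y [h|h]; first exact: hg.
    by case: (hg _ _ h); [right|left].
Qed.
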